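(* Let $m\geq 3$, let $\mathcal{S}$ be a locating-dominating set of the grid graph $G_{3,m}=P_3\square P_m$, and let $\mathcal{B}$ be a $(3\times 3)$-block of $G_{3,m}$. Then $|\mathcal{B}\cap\mathcal{S}|\geq 2$.
   Context: $P_n$ is the path on $n$ vertices, $\square$ the Cartesian product of graphs, and $G_{n,m}=P_n\square P_m$ is viewed as a grid with $n$ rows and $m$ columns. A $(n\times \ell)$-block of $G_{n,m}$ is the set of vertices in $\ell$ consecutive columns. For $C\subseteq V(G)$ and $v\in V(G)$ let $I(v)=N[v]\cap C$ ($N[v]$ the closed neighborhood). $C$ is a locating-dominating set if $I(v)\neq\emptyset$ for all $v\in V(G)\setminus C$ and $I(u)\neq I(v)$ for all distinct $u,v\in V(G)\setminus C$. *)

(* Defs.v *)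
From mathcomp Require Import all_boot.
Set Implicit Arguments. Unset Strict Implicit. Unset Printing Implicit Defensive.

(* Grid graph G_{n,m} = P_n □ P_m: vertex (i,j) with row i < n, column j < m. *)
Definition grid_vertex (n m : nat) := ('I_n * 'I_m)%type.

Definition nat_dist (a b : nat) : nat := (a - b) + (b - a).

Definition grid_adj (n m : nat) (u v : grid_vertex n m) : bool :=
  ((u.1 == v.1 :> nat) && (nat_dist u.2 v.2 == 1))
  || ((u.2 == v.2 :> nat) && (nat_dist u.1 v.1 == 1)).

Definition closed_nbhd (n m : nat) (v : grid_vertex n m) : {set grid_vertex n m} :=
  [set u | (u == v) || grid_adj u v].

Definition I_code (n m : nat) (C : {set grid_vertex n m}) (v : grid_vertex n m) :=
  closed_nbhd v :&: C.

Definition locating_dominating (n m : nat) (C : {set grid_vertex n m}) : Prop :=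
  (forall v, v \notin C -> I_code C v != set0) /\
  (forall u v, u \notin C -> v \notin C -> u != v -> I_code C u != I_code C v).

Definition block (n m j0 l : nat) : {set grid_vertex n m} :=
  [set v : grid_vertex n m | (j0 <= v.2) && (v.2 < j0 + l)].

(* Main.v *)
Require Import Defs.
From mathcomp Require Import all_boot.
From mathcomp Require Import zify.

Lemma nbhd_in_block (m j0 : nat) (S : {set grid_vertex 3 m}) (v : grid_vertex 3 m) :
  v.2 = j0.+1 :> nat -> I_code S v \subset block 3 m j0 3 :&: S.
Proof.
move=> Hv; apply/subsetP => u; rewrite /I_code !inE => /andP[Hu ->].
rewrite andbT; case/orP: Hu => [/eqP -> | ]; first by rewrite Hv; lia.
rewrite /grid_adj /nat_dist; case/orP => /andP[/eqP H1 /eqP H2]; lia.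
Qed.

Lemma sub_card1 (T : finType) (A B : {set T}) :
  A \subset B -> A != set0 -> #|B| <= 1 -> A = B.
Proof.
move=> sAB nA cB; apply/eqP; rewrite eqEcard sAB /=.
rewrite -card_gt0 in nA; lia.
Qed.

Theorem lemma4p10 (m : nat) (S : {set grid_vertex 3 m}) (j0 : nat) :
  3 <= m -> locating_dominating S -> j0 + 3 <= m ->
  2 <= #|block 3 m j0 3 :&: S|.
Proof.
move=> _ [Hdom Hloc] Hj.
rewrite leqNgt; apply/negP => HT.
have HT1 : #|block 3 m j0 3 :&: S| <= 1 by lia.
have Hc : j0.+1 < m by lia.
pose c := Ordinal Hc.
pose v (i : 'I_3) : grid_vertex 3 m := (i, c).
have key : forall i k : 'I_3, i != k -> v i \notin S -> v k \notin S -> False.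
  move=> i k Hik Hi Hk.
  have Ei := sub_card1 _ _ _ (@nbhd_in_block m j0 S (v i) (erefl _)) (Hdom _ Hi) HT1.
  have Ek := sub_card1 _ _ _ (@nbhd_in_block m j0 S (v k) (erefl _)) (Hdom _ Hk) HT1.
  have : v i != v k by rewrite /v xpair_eqE negb_and Hik.
  by move/(Hloc _ _ Hi Hk); rewrite Ei Ek eqxx.
have inT : forall i, v i \in S -> v i \in block 3 m j0 3 :&: S.
  by move=> i Hi; rewrite !inE Hi /=; lia.
pose i0 : 'I_3 := ord0.
pose i1 : 'I_3 := Ordinal (isT : 1 < 3).
pose i2 : 'I_3 := Ordinal (isT : 2 < 3).
have two : forall i k : 'I_3, i != k -> v i \in S -> v k \in S -> False.
  move=> i k Hik Hi Hk.
  have : 1 < #|block 3 m j0 3 :&: S|.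
    apply: (@leq_trans #|[set v i; v k]|).
      by rewrite cards2 /v xpair_eqE negb_and Hik.
    apply/subset_leq_card/subsetP => x; rewrite in_set2 => /orP[] /eqP ->; exact: inT.
  lia.
case: (boolP (v i0 \in S)) => H0; case: (boolP (v i1 \in S)) => H1;
  case: (boolP (v i2 \in S)) => H2.
all: first [ exact: (two i0 i1 isT H0 H1) | exact: (two i0 i2 isT H0 H2)
           | exact: (two i1 i2 isT H1 H2) | exact: (key i0 i1 isT H0 H1)
           | exact: (key i0 i2 isT H0 H2) | exact: (key i1 i2 isT H1 H2) ].
Qed.
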